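(* (Coinduction principle.) Let $\Sigma$ be a first-order signature, $\varphi(X_1,\ldots,X_m)$ a standard formula over $\Sigma$ with free relational variables among $X_1,\ldots,X_m$ and no free individual variables, and $\mathbb{A}$ a $\Sigma$-structure. Let $R_1,\ldots,R_m$ be coinductive relations on (the carrier of) $\mathbb{A}$ with arities matching those of $X_1,\ldots,X_m$, with approximants $R_i^\alpha$. Suppose that for every ordinal $\alpha$, if $\mathbb{A}\models\varphi(R_1^\alpha,\ldots,R_m^\alpha)$ then $\mathbb{A}\models\varphi(R_1^{\alpha+1},\ldots,R_m^{\alpha+1})$. Then $\mathbb{A}\models\varphi(R_1^\alpha,\ldots,R_m^\alpha)$ for every ordinal $\alpha$; in particular $\mathbb{A}\models\varphi(R_1,\ldots,R_m)$.
   Context: Formulas are first-order formulas over $\Sigma$ additionally allowing free (never bound) relational variables; quantification is only over individuals. A formula is standard if it is equivalent to a conjunction of formulas of the form $\forall x_1\ldots\forall x_n\big(\psi(x_1,\ldots,x_n,X_1,\ldots,X_m)\to X_{i_1}(t^1_1,\ldots,t^1_{n_1})\land\cdots\land X_{i_k}(t^k_1,\ldots,t^k_{n_k})\big)$ with $\psi$ quantifier-free and $t^j_l$ terms. An $n$-ary relation $R\subseteq A^n$ is coinductive if it is the greatest fixpoint of a (specified) monotone $F:\mathcal{P}(A^n)\to\mathcal{P}(A^n)$; its approximants (the final sequence of $F$) are $R^0=A^n$, $R^{\alpha+1}=F(R^\alpha)$, and $R^\lambda=\bigcap_{\alpha<\lambda}R^\alpha$ for limit ordinals $\lambda$. $\varphi(R_1,\ldots,R_m)$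 denotes $\varphi$ with each $X_i$ interpreted as $R_i$. *)

(* Defs.v *)
From Stdlib Require Import List.
From mathcomp Require Import all_boot.
Set Implicit Arguments.
Unset Strict Implicit.
Unset Printing Implicit Defensive.

Record signature := Signature {
  fsym : Type;  farity : fsym -> nat;   (* function symbols (constants: arity 0) *)
  rsym : Type;  rarity : rsym -> nat }.

Record structure (S : signature) := Structure {
  carrier :> Type;
  fun_interp : forall f : fsym S, ('I_(farity f) -> carrier) -> carrier;
  rel_interp : forall r : rsym S, ('I_(rarity r) -> carrier) -> Prop }.

Definition nrel (A : Type) (n : nat) := ('I_n -> A) -> Prop.

Inductive term (S : signature) : Type :=
| tvar : nat -> term S
| tapp : forall f : fsym S, ('I_(farity f) -> term S) -> term S.

(* Formulas over S with free relational variables taken from V,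
   variable X : V having arity var_ar X. Quantifiers range over individuals. *)
Inductive formula (S : signature) (V : Type) (var_ar : V -> nat) : Type :=
| fTrue | fFalse
| fEq : term S -> term S -> @formula S V var_ar
| fRel : forall r : rsym S, ('I_(rarity r) -> term S) -> @formula S V var_ar
| fVar : forall X : V, ('I_(var_ar X) -> term S) -> @formula S V var_ar
| fNot : @formula S V var_ar -> @formula S V var_ar
| fAnd : @formula S V var_ar -> @formula S V var_ar -> @formula S V var_ar
| fOr  : @formula S V var_ar -> @formula S V var_ar -> @formula S V var_ar
| fImp : @formula S V var_ar -> @formula S V var_ar -> @formula S V var_ar
| fAll : nat -> @formula S V var_ar -> @formula S V var_ar
| fEx  : nat -> @formula S V var_ar -> @formula S V var_ar.

Arguments formula S {V} var_ar.
Arguments fTrue {S V var_ar}.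
Arguments fFalse {S V var_ar}.

Section Syntax.
Variables (S : signature) (V : Type) (var_ar : V -> nat).

Fixpoint occurs_term (x : nat) (t : term S) : Prop :=
  match t with
  | tvar y => y = x
  | tapp f args => exists i, occurs_term x (args i)
  end.

Fixpoint occurs_free (x : nat) (phi : formula S var_ar) : Prop :=
  match phi with
  | fTrue | fFalse => False
  | fEq t u => occurs_term x t \/ occurs_term x u
  | fRel r args => exists i, occurs_term x (args i)
  | fVar X args => exists i, occurs_term x (args i)
  | fNot p => occurs_free x p
  | fAnd p q | fOr p q | fImp p q => occurs_free x p \/ occurs_free x q
  | fAll y p | fEx y p => y <> x /\ occurs_free x p
  end.

Definition closed_formula (phi : formula S var_ar) : Prop :=
  forall x, ~ occurs_free x phi.

Fixpoint quantifier_free (phi : formula S var_ar) : Prop :=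
  match phi with
  | fTrue | fFalse | fEq _ _ | fRel _ _ | fVar _ _ => True
  | fNot p => quantifier_free p
  | fAnd p q | fOr p q | fImp p q => quantifier_free p /\ quantifier_free q
  | fAll _ _ | fEx _ _ => False
  end.

Fixpoint foralls (xs : seq nat) (phi : formula S var_ar) : formula S var_ar :=
  match xs with
  | [::] => phi
  | x :: xs' => fAll x (foralls xs' phi)
  end.

Definition var_atom := {X : V & 'I_(var_ar X) -> term S}.

Definition atom_formula (a : var_atom) : formula S var_ar :=
  fVar (projT2 a).

Definition big_and (ps : seq (formula S var_ar)) : formula S var_ar :=
  foldr (@fAnd S V var_ar) fTrue ps.

(* A basic standard clause  forall xs (psi -> X_{i1}(..) /\ ... /\ X_{ik}(..)) *)
Record clause := Clause {
  cl_vars : seq nat;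
  cl_pre : formula S var_ar;           (* psi, required quantifier-free *)
  cl_atoms : seq var_atom }.

Definition clause_formula (c : clause) : formula S var_ar :=
  foralls (cl_vars c) (fImp (cl_pre c) (big_and (map atom_formula (cl_atoms c)))).

End Syntax.

Section Semantics.
Variables (S : signature) (M : structure S).

Fixpoint eval (e : nat -> M) (t : term S) : M :=
  match t with
  | tvar x => e x
  | tapp f args => fun_interp (fun i => eval e (args i))
  end.

Definition update (e : nat -> M) (x : nat) (a : M) : nat -> M :=
  fun y => if y == x then a else e y.

Fixpoint sat (V : Type) (var_ar : V -> nat)
    (I : forall X : V, nrel M (var_ar X)) (e : nat -> M)
    (phi : formula S var_ar) : Prop :=
  match phi with
  | fTrue => True
  | fFalse => False
  | fEq t u => eval e t = eval e u
  | fRel r args => rel_interp (fun i => eval e (args i))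
  | fVar X args => I X (fun i => eval e (args i))
  | fNot p => ~ sat I e p
  | fAnd p q => sat I e p /\ sat I e q
  | fOr p q => sat I e p \/ sat I e q
  | fImp p q => sat I e p -> sat I e q
  | fAll x p => forall a : M, sat I (update e x a) p
  | fEx x p => exists a : M, sat I (update e x a) p
  end.

(* M |= phi(I) : for a closed phi, truth does not depend on the assignment. *)
Definition models (V : Type) (var_ar : V -> nat)
    (I : forall X : V, nrel M (var_ar X)) (phi : formula S var_ar) : Prop :=
  forall e : nat -> M, sat I e phi.

End Semantics.

Definition standard (S : signature) (V : Type) (var_ar : V -> nat)
    (phi : formula S var_ar) : Prop :=
  exists cs : seq (@clause S V var_ar),
    (forall c, List.In c cs -> quantifier_free (cl_pre c)) /\
    forall (M : structure S) (I : forall X : V, nrel M (var_ar X)) (e : nat -> M),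
      sat I e phi <-> sat I e (big_and (map (@clause_formula S V var_ar) cs)).

Definition monotone_op (A : Type) (n : nat) (F : nrel A n -> nrel A n) : Prop :=
  forall P Q : nrel A n, (forall x, P x -> Q x) -> forall x, F P x -> F Q x.

Definition is_gfp (A : Type) (n : nat) (F : nrel A n -> nrel A n) (R : nrel A n) : Prop :=
  (forall x, R x <-> F R x) /\
  (forall P : nrel A n, (forall x, P x <-> F P x) -> forall x, P x -> R x).

(* Ordinals, represented as (generalised) Brouwer trees: every ordinal is the
   rank of some tree; [olim I f] denotes the supremum of the [f i]. *)
Inductive bord : Type :=
| ozero : bord
| osucc : bord -> bord
| olim : forall I : Type, (I -> bord) -> bord.

Fixpoint approx (A : Type) (n : nat) (F : nrel A n -> nrel A n) (a : bord) : nrel A n :=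
  match a with
  | ozero => fun _ => True
  | osucc b => F (approx F b)
  | @olim J f => fun x => forall i : J, approx F (f i) x
  end.

(* Main.v *)
Require Import Defs.
From mathcomp Require Import all_boot.
From Stdlib Require Import Classical ClassicalEpsilon.

Definition Sub {M : Type} {V : Type} {var_ar : V -> nat}
  (I1 I2 : forall X : V, nrel M (var_ar X)) : Prop :=
  forall X x, I1 X x -> I2 X x.

Section Lim.
Variables (S : signature) (V : Type) (var_ar : V -> nat) (M : structure S).
Variables (K : Type) (J : K -> forall X : V, nrel M (var_ar X))
  (I0 : forall X : V, nrel M (var_ar X)).
Hypothesis hI0 : forall X x, I0 X x <-> forall k, J k X x.
Hypothesis chain : forall k k', Sub (J k) (J k') \/ Sub (J k') (J k).

Lemma qf_event (psi : formula S var_ar) : quantifier_free psi -> forall e k0,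
  exists k, Sub (J k) (J k0) /\
   forall k', Sub (J k') (J k) -> (sat (J k') e psi <-> sat I0 e psi).
Proof.
induction psi as [| | t u | r args | X args | p IH | p IHp q IHq | p IHp q IHq
  | p IHp q IHq | x p IH | x p IH]; simpl; intros qf e k0;
  try (exists k0; split; [intros ??; auto | intros; tauto]).
- destruct (classic (I0 X (fun i => eval e (args i)))) as [H|H].
  + exists k0; split; [intros ??; auto|]. intros k' _.
    split; [intros; exact H| intros _; apply (proj1 (hI0 _ _) H)].
  + assert (H1 : ~ forall k, J k X (fun i => eval e (args i))).
    { intro H2; apply H, hI0, H2. }
    apply not_all_ex_not in H1; destruct H1 as [k1 Hk1].
    destruct (chain k0 k1) as [H2|H2].
    * exists k0; split; [intros ??; auto|]. intros k' Hk'; split; [|tauto].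
      intros Hc; exfalso; apply Hk1, H2, Hk', Hc.
    * exists k1; split; [exact H2|]. intros k' Hk'; split; [|tauto].
      intros Hc; exfalso; apply Hk1, Hk', Hc.
- destruct (IH qf e k0) as [k [Hk Hag]]. exists k; split; [exact Hk|].
  intros k' Hk'; specialize (Hag k' Hk'); tauto.
- destruct qf as [qp qq]. destruct (IHp qp e k0) as [k1 [Hk1 Hag1]].
  destruct (IHq qq e k1) as [k2 [Hk2 Hag2]]. exists k2; split.
  + intros ??; auto.
  + intros k' Hk'. assert (Sub (J k') (J k1)) by (intros ??; auto).
    specialize (Hag1 k' H); specialize (Hag2 k' Hk'); tauto.
- destruct qf as [qp qq]. destruct (IHp qp e k0) as [k1 [Hk1 Hag1]].
  destruct (IHq qq e k1) as [k2 [Hk2 Hag2]]. exists k2; split.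
  + intros ??; auto.
  + intros k' Hk'. assert (Sub (J k') (J k1)) by (intros ??; auto).
    specialize (Hag1 k' H); specialize (Hag2 k' Hk'); tauto.
- destruct qf as [qp qq]. destruct (IHp qp e k0) as [k1 [Hk1 Hag1]].
  destruct (IHq qq e k1) as [k2 [Hk2 Hag2]]. exists k2; split.
  + intros ??; auto.
  + intros k' Hk'. assert (Sub (J k') (J k1)) by (intros ??; auto).
    specialize (Hag1 k' H); specialize (Hag2 k' Hk'); tauto.
Qed.

Lemma atoms_mono (I1 I2 : forall X : V, nrel M (var_ar X)) e
  (atoms : seq (var_atom S var_ar)) :
  Sub I1 I2 -> sat I1 e (big_and (map (@atom_formula S V var_ar) atoms)) ->
  sat I2 e (big_and (map (@atom_formula S V var_ar) atoms)).
Proof.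
intros HS; induction atoms as [|[X args] l IH]; unfold big_and in *; simpl; [exact id|].
intros [H1 H2]; split; [apply HS, H1|auto].
Qed.

Lemma big_and_sat (I : forall X : V, nrel M (var_ar X)) e ps :
  sat I e (big_and ps) <-> forall p, List.In p ps -> sat I e p.
Proof.
induction ps as [|p ps IH]; unfold big_and in *; simpl.
- split; auto. intros _ p [].
- rewrite IH. split.
  + intros [H1 H2] q [<-|Hq]; auto.
  + intros H; split; auto.
Qed.

Lemma clause_lim (c : clause S var_ar) : quantifier_free (cl_pre c) ->
  forall e, (forall k, sat (J k) e (clause_formula c)) -> sat I0 e (clause_formula c).
Proof.
intros qf. unfold clause_formula. generalize (cl_vars c) as xs.
induction xs as [|x xs IH]; simpl.
- intros e H Hpsi.
  assert (Hall : forall k0, sat (J k0) e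
     (big_and (map (@atom_formula S V var_ar) (cl_atoms c)))).
  { intros k0. destruct (@qf_event (cl_pre c) qf e k0) as [k [Hk Hag]].
    apply (@atoms_mono (J k) (J k0) e _ Hk). apply H. apply (Hag k); [intros ??; auto| exact Hpsi]. }
  clear H Hpsi. induction (cl_atoms c) as [|[X args] l IHl]; unfold big_and in *;
    simpl in *; auto.
  split.
  + apply hI0. intros k; apply (Hall k).
  + apply IHl. intros k; apply (Hall k).
- intros e H a. apply IH. intros k; apply H.
Qed.

Lemma lim_models (phi : formula S var_ar) : standard phi ->
  (forall k, models (J k) phi) -> models I0 phi.
Proof.
intros [cs [Hqf Heq]] H e. apply Heq. apply big_and_sat. intros p Hp.
apply List.in_map_iff in Hp. destruct Hp as [c [<- Hc]].
apply clause_lim; [apply Hqf, Hc|]. intros k.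
apply (proj1 (big_and_sat _ _ _) (proj1 (Heq M (J k) e) (H k e))).
apply List.in_map_iff; eauto.
Qed.

End Lim.

Theorem theorem4p29 (S : signature) (m : nat) (ar : 'I_m -> nat)
  (phi : formula S ar) (phi_std : standard phi) (phi_closed : closed_formula phi)
  (M : structure S)
  (F : forall i : 'I_m, nrel M (ar i) -> nrel M (ar i))
  (F_mono : forall i, monotone_op (F i))
  (R : forall i : 'I_m, nrel M (ar i))
  (R_gfp : forall i, is_gfp (F i) (R i))
  (step : forall a : bord,
     models (fun i => approx (F i) a) phi ->
     models (fun i => approx (F i) (osucc a)) phi) :
  (forall a : bord, models (fun i => approx (F i) a) phi) /\ models R phi.
Proof.
set A := fun (b : bord) (i : 'I_m) => approx (F i) b.
assert (comp : forall c b, Sub (A c) (A b) \/ Sub (A b) (A c)).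
{ induction c as [|d IHd|Jc g IHg].
  - intros b; right; intros ???; exact I.
  - induction b as [|e IHe|Jb h IHh].
    + left; intros ???; exact I.
    + destruct (IHd e) as [H|H]; [left|right]; intros i x; apply F_mono; apply H.
    + destruct (classic (exists j, Sub (A (h j)) (A (osucc d)))) as [[j Hj]|Hn].
      * right. intros i x Hx. apply Hj. exact (Hx j).
      * left. intros i x Hx j. destruct (IHh j) as [H|H].
        -- exact (H i x Hx).
        -- exfalso; apply Hn; exists j; exact H.
  - intros b. destruct (classic (exists j, Sub (A (g j)) (A b))) as [[j Hj]|Hn].
    + left. intros i x Hx. apply Hj. exact (Hx j).
    + right. intros i x Hx j. destruct (IHg j b) as [H|H].
      * exfalso; apply Hn; exists j; exact H.
      * exact (H i x Hx). }
assert (part1 : forall a, models (A a) phi).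
{ induction a as [|d IHd|Jl f IHf].
  - apply (@lim_models S 'I_m ar M Empty_set (fun k => match k with end)).
    + intros X x; split; [intros _ []| intros _; exact I].
    + intros [].
    + exact phi_std.
    + intros [].
  - apply step, IHd.
  - apply (@lim_models S 'I_m ar M Jl (fun k => A (f k))).
    + intros X x; split; auto.
    + intros k k'; apply comp.
    + exact phi_std.
    + exact IHf. }
split; [exact part1|].
assert (defl : forall b, Sub (A (osucc b)) (A b)).
{ induction b as [|d IHd|Jl f IHf].
  - intros ???; exact I.
  - intros i x Hx. simpl in Hx |- *. eapply F_mono; [|exact Hx]. apply IHd.
  - intros i x Hx j. apply IHf. simpl in Hx |- *. eapply F_mono; [|exact Hx].
    intros y Hy; exact (Hy j). }
assert (RA : forall b, Sub R (A b)).
{ induction b as [|d IHd|Jl f IHf].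
  - intros ???; exact I.
  - intros i x Hx. simpl. eapply F_mono; [apply IHd|]. apply (proj1 (R_gfp i)), Hx.
  - intros i x Hx j. apply IHf, Hx. }
pose idx := {T : forall i, nrel M (ar i) | exists b, T = A b}.
assert (bofex : forall s : idx, {b | A b = proj1_sig s}).
{ intros s. apply constructive_indefinite_description.
  destruct s as [T [b Hb]]; exists b; simpl; auto. }
pose L := olim (fun s => proj1_sig (bofex s)).
assert (Lle : forall b, Sub (A L) (A b)).
{ intros b i x Hx.
  pose sb := exist (fun T => exists b, T = A b) (A b) (ex_intro (fun b0 => A b = A b0) b (erefl (A b))) : idx.
  specialize (Hx sb). destruct (bofex sb) as [b' Hb'] eqn:E. simpl in Hx.
  rewrite E in Hx. simpl in Hx.
  change (A b' i x) in Hx. rewrite Hb' in Hx. exact Hx. }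
assert (Lfix : forall i x, A L i x <-> F i (A L i) x).
{ intros i x; split.
  - intros Hx. exact (Lle (osucc L) i x Hx).
  - intros Hx s. apply defl. simpl. eapply F_mono; [|exact Hx].
    intros y Hy; exact (Hy s). }
apply (@lim_models S 'I_m ar M bord A).
- intros X x; split.
  + intros Hx b; apply RA, Hx.
  + intros H. apply (proj2 (R_gfp X) (A L X) (Lfix X)). apply H.
- intros k k'; apply comp.
- exact phi_std.
- exact part1.
Qed.
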